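(* Let $T$ be a tree such that the longest $2$-path in $T$ has length $d\ge1$, and let $k$ be a positive integer. Then there exists $L>0$ (depending only on $k$ and $d$) such that the following holds: if $T$ contains a $\mathrm{C}$-gadget of order $d$ and length $L$, then there exists $1\le d'\le d$ such that $T$ contains a strong $\mathrm{C}$-gadget of order $d'$ with at least $k$ junctions.
   Context: In a tree $T$: a $2$-path of length $a$ is a path $x_0,\dots,x_a$ with $\deg(x_0)\ne2$, $\deg(x_1)=\dots=\deg(x_{a-1})=2$, $\deg(x_a)\ne 2$. A source is a vertex of degree $>2$. A ray of length $a$ is a $2$-path $x_0,\dots,x_a$ with $\deg(x_0)>2$ and $\deg(x_a)=1$; $x_0$ is its source. A $\mathrm{C}$-gadget of order $d$ and length $k$ is a path $x_0,\dots,x_k$ in $T$ such that each inner vertex $x_i$ either has degree $2$ or is a source such that every neighbour of $x_i$ other than $x_{i-1},x_{i+1}$ is contained in a ray of length at most $d$ from $x_i$ to a leaf. A $\mathrm{C}$-gadget $x_0,\dots,x_L$ of order $d$ is a strong $\mathrm{C}$-gadget with $k$ junctions if there are integers $0=i_0<i_1<\dots<i_k<i_{k+1}=L$ such that (I) $i_{j+1}-i_j>2d$ for all $j\in\{0,\dots,k\}$, and (II) for all $j\in\{1,\dots,k\}$, $x_{i_j}$ is the source of a ray of length $d$ containing neither $x_{i_j-1}$ nor $x_{i_j+1}$; the vertices $x_{i_1},\dots,x_{i_k}$ are the junctions. *)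

(* Defs.v *)
(* finite simple graphs as symmetric irreflexive relations on a finType. *)
From mathcomp Require Import all_boot.
Set Implicit Arguments. Unset Strict Implicit. Unset Printing Implicit Defensive.

Section Trees.
Variables (V : finType) (e : rel V).

Definition deg (x : V) : nat := #|[set y | e x y]|.

Definition simple_graph : Prop := symmetric e /\ irreflexive e.

Definition has_cycle : Prop :=
  exists c : seq V, [/\ 3 <= size c, uniq c & cycle e c].

Definition is_tree : Prop :=
  [/\ simple_graph, (forall x y : V, connect e x y) & ~ has_cycle].

(* A path x_0, x_1, ..., x_a is represented by its head x = x_0 and tail p,
   so that x_i = nth x (x :: p) i and its length is a = size p. *)
Definition is_gpath (x : V) (p : seq V) : bool := uniq (x :: p) && path e x p.

Definition vx (x : V) (p : seq V) (i : nat) : V := nth x (x :: p) i.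

Definition two_path (x : V) (p : seq V) : Prop :=
  [/\ is_gpath x p, 1 <= size p, deg x != 2, deg (last x p) != 2 &
      forall i, 0 < i < size p -> deg (vx x p i) = 2].

Definition longest_two_path (d : nat) : Prop :=
  (exists x p, two_path x p /\ size p = d) /\
  (forall x p, two_path x p -> size p <= d).

Definition source (x : V) : bool := 2 < deg x.

Definition ray (x : V) (p : seq V) : Prop :=
  [/\ two_path x p, source x & deg (last x p) = 1].

Definition C_gadget (d : nat) (x : V) (p : seq V) : Prop :=
  is_gpath x p /\
  forall i, 0 < i < size p ->
    deg (vx x p i) = 2 \/
    (source (vx x p i) /\
     forall y, e (vx x p i) y -> y != vx x p i.-1 -> y != vx x p i.+1 ->
       exists q, [/\ ray (vx x p i) q, size q <= d & y \in q]).

Definition strong_C_gadget (d k : nat) (x : V) (p : seq V) : Prop :=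
  C_gadget d x p /\
  exists ii : nat -> nat,
    [/\ ii 0 = 0, ii k.+1 = size p,
        (forall j, j <= k -> ii j + 2 * d < ii j.+1) &
        (forall j, 1 <= j <= k ->
           exists q, [/\ ray (vx x p (ii j)) q, size q = d,
                         vx x p (ii j).-1 \notin q & vx x p (ii j).+1 \notin q])].

End Trees.

(* Main.v *)
Require Import Defs.
From mathcomp Require Import all_boot.
From Stdlib Require Import Classical.
From mathcomp Require Import zify.
Set Implicit Arguments. Unset Strict Implicit. Unset Printing Implicit Defensive.

Section Aux.
Variables (V : finType) (e : rel V).
Hypothesis tree : is_tree e.

Lemma esym x y : e x y -> e y x.
Proof. by case: tree => [[s _] _ _]; rewrite s. Qed.

Lemma eirr x : e x x = false.
Proof. by case: tree => [[_ i] _ _]; rewrite i. Qed.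

Lemma vxS (x : V) p i : vx x p i.+1 = nth x p i.
Proof. by []. Qed.

Lemma gpathE (x : V) p : is_gpath e x p <->
  uniq (x :: p) /\ forall i, i < size p -> e (vx x p i) (vx x p i.+1).
Proof.
rewrite /is_gpath; split.
  by case/andP=> u /(pathP x) H; split.
by case=> u H; rewrite u /=; apply/(pathP x).
Qed.

Lemma head_nb z q y : is_gpath e z q -> e z y -> y \in q -> y = vx z q 1.
Proof.
move=> /gpathE [u H] ezy yq.
have jl := yq; rewrite -index_mem in jl.
case Hj: (index y q) => [|j].
  by rewrite vxS -Hj nth_index.
exfalso; case: tree => _ _; apply.
exists (z :: take j.+2 q); split.
- by rewrite /= size_takel // -Hj index_mem.
- move: u; rewrite /= => /andP [zq uq]; rewrite take_uniq // andbT.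
  by apply/negP => /mem_take; apply/negP.
- rewrite /= rcons_path; apply/andP; split.
    have : path e z q by apply/(pathP z) => i hi; apply: H.
    by rewrite -{1}(cat_take_drop j.+2 q) cat_path => /andP [].
  rewrite -nth_last size_takel; last by rewrite -Hj index_mem.
  by rewrite nth_take // -Hj nth_index //; apply: esym.
Qed.

Definition Pp (x : V) p := is_gpath e x p /\ 1 <= size p /\
  forall i, 0 < i < size p -> deg e (vx x p i) = 2.

Lemma revE (x : V) p : last x p :: rev (belast x p) = rev (x :: p).
Proof. by rewrite [x :: p]lastI rev_rcons. Qed.

Lemma rev_vx (x : V) p i : i <= size p ->
  vx (last x p) (rev (belast x p)) i = vx x p (size p - i).
Proof.
move=> hi; rewrite /vx revE nth_rev /=; last by lia.
rewrite subSS; apply: set_nth_default => /=; lia.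
Qed.

Lemma last_vx (x : V) p : last x p = vx x p (size p).
Proof. by have := nth_last x (x :: p); rewrite /vx /= => ->. Qed.

Lemma vx_cons (z x : V) p i : i <= size p -> vx z (x :: p) i.+1 = vx x p i.
Proof. by move=> hi; rewrite /vx /=; apply: set_nth_default => /=; lia. Qed.

Lemma Pp_rev (x : V) p : Pp x p -> Pp (last x p) (rev (belast x p)).
Proof.
case=> /gpathE [u H] [s1 H2]; rewrite /Pp size_rev size_belast; split; last split => //.
  apply/gpathE; split; first by rewrite revE rev_uniq.
  move=> i; rewrite size_rev size_belast => hi; rewrite !rev_vx; try lia.
  have -> : size p - i = (size p - i.+1).+1 by lia.
  apply: esym; apply: H; lia.
move=> i hi; rewrite rev_vx; last lia; apply: H2; lia.
Qed.

Lemma side_exists (v a b : V) : 2 < deg e v -> exists y, [/\ e v y, y != a & y != b].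
Proof.
rewrite /deg => hd.
set N := [set y | e v y] in hd *.
have h1 := cardsD1 a N; have h2 := cardsD1 b (N :\ a).
have : 0 < #|N :\ a :\ b| by move: h1 h2 hd; case: (a \in N); case: (b \in N :\ a) => /=; lia.
rewrite card_gt0 => /set0Pn [y]; rewrite !in_setD1 in_set => /and3P [yb ya ey].
by exists y.
Qed.

Lemma Pp_pre (x : V) p : Pp x p -> deg e x = 2 -> exists z, Pp z (x :: p).
Proof.
case=> hg [s1 H2] dx.
have [u H] := (gpathE x p).1 hg.
have e0 : e x (vx x p 1) by apply: (H 0).
have [z [ez zh]] : exists z, e x z /\ z != vx x p 1.
  move: dx; rewrite /deg; set N := [set y | e x y] => dx.
  have h1 := cardsD1 (vx x p 1) N.
  have : 0 < #|N :\ vx x p 1| by move: h1 dx; case: (_ \in N); lia.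
  rewrite card_gt0 => /set0Pn [y]; rewrite !in_setD1 in_set => /andP [yb ey].
  by exists y.
have zx : z != x by apply/eqP => E; move: ez; rewrite E eirr.
have zp : z \notin p by apply/negP => zp; move: zh; rewrite (head_nb hg ez zp) eqxx.
exists z; rewrite /Pp; split; last split.
- apply/gpathE; split.
    by move: u; rewrite /= inE negb_or zx zp /=.
  move=> [|i] hi; first by apply: esym.
  rewrite !vx_cons; try (move: hi => /=; lia).
  apply: H; move: hi => /=; lia.
- by rewrite /= ltnS.
- move=> i /andP [i0 ip]; case: i i0 ip => // [[|i]] _ ip //.
  rewrite vx_cons; last by move: ip => /=; lia.
  apply: H2; move: ip => /=; lia.
Qed.

Lemma Pp_size (x : V) p : Pp x p -> (size p).+1 <= #|V|.
Proof.
case=> /gpathE [u _] _; have := max_card (mem (x :: p)); by rewrite (card_uniqP u).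
Qed.

Lemma Pp_step (x : V) p : Pp x p -> deg e x = 2 \/ deg e (last x p) = 2 ->
  exists x' p', Pp x' p' /\ size p' = (size p).+1.
Proof.
move=> hP [dx|dl].
  by have [z hz] := Pp_pre hP dx; exists z, (x :: p).
have [z hz] := Pp_pre (Pp_rev hP) dl.
by exists z, (last x p :: rev (belast x p)); rewrite /= size_rev size_belast.
Qed.

Lemma extend m : forall (x : V) p, Pp x p -> #|V| - size p <= m ->
  exists x' p', two_path e x' p' /\ size p <= size p'.
Proof.
elim: m => [|m IH] x p hP hm.
  case: (boolP (deg e x == 2)) => [/eqP dx|dx].
    have [x' [p' [h1 h2]]] := Pp_step hP (or_introl dx).
    have := Pp_size h1; lia.
  case: (boolP (deg e (last x p) == 2)) => [/eqP dl|dl].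
    have [x' [p' [h1 h2]]] := Pp_step hP (or_intror dl).
    have := Pp_size h1; lia.
  case: hP => [g [s1 H]]; exists x, p; split => //.
have H0 : deg e x = 2 \/ deg e (last x p) = 2 -> exists x' p', two_path e x' p' /\ size p <= size p'.
  move=> hd; have [x' [p' [h1 h2]]] := Pp_step hP hd.
  have := Pp_size h1 => hs.
  have [x'' [p'' [t s]]] := IH x' p' h1 (ltac:(lia)).
  exists x'', p''; split => //; lia.
case: (boolP (deg e x == 2)) => [/eqP dx|dx]; first by apply: H0; left.
case: (boolP (deg e (last x p) == 2)) => [/eqP dl|dl]; first by apply: H0; right.
case: hP => [g [s1 H]]; exists x, p; split => //.
Qed.

Lemma gadget0 (x : V) p : C_gadget e 0 x p -> 1 <= size p -> Pp x p.
Proof.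
case=> g H s1; split => //; split => // i hi.
case: (H i hi) => // [[src side]]; exfalso.
have [y [ey ya yb]] := side_exists (vx x p i.-1) (vx x p i.+1) src.
have [q [_ sq yq]] := side y ey ya yb.
by case: q sq yq.
Qed.


Definition marked D (x : V) p i := exists q, [/\ ray e (vx x p i) q, size q = D,
  vx x p i.-1 \notin q & vx x p i.+1 \notin q].

Definition sub (x : V) p a M := mkseq (fun i => vx x p (a + i.+1)) M.

Lemma vx_sub (x : V) p a M i : i <= M -> vx (vx x p a) (sub x p a M) i = vx x p (a + i).
Proof. by case: i => [|i] hi; [rewrite addn0 | rewrite vxS /sub nth_mkseq]. Qed.

Lemma sub_gadget D (x : V) p a M : C_gadget e D.+1 x p -> a + M <= size p ->
  (forall i, a < i < a + M -> ~ marked D.+1 x p i) ->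
  C_gadget e D (vx x p a) (sub x p a M).
Proof.
case=> hg hC hs hM; have [u hE] := (gpathE x p).1 hg.
split.
  apply/gpathE; split.
    apply/(uniqP (vx x p a)) => i j; rewrite !inE /= size_mkseq => hi hj E.
    have E' : vx x p (a + i) = vx x p (a + j).
      have e1 := @vx_sub x p a M i ltac:(lia).
      have e2 := @vx_sub x p a M j ltac:(lia).
      by rewrite -e1 -e2.
    have := (uniqP x u) (a + i) (a + j) ltac:(rewrite inE /=; lia) ltac:(rewrite inE /=; lia) E'.
    lia.
  move=> i; rewrite size_mkseq => hi; rewrite !vx_sub; try lia.
  rewrite addnS; apply: hE; lia.
move=> i; rewrite size_mkseq => hi; rewrite !vx_sub; try lia.
have -> : a + i.-1 = (a + i).-1 by lia.
rewrite addnS.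
case: (hC (a + i) ltac:(lia)) => [d2|[src side]]; [by left | right; split => // y ey ya yb].
have [q [r sq yq]] := side y ey ya yb.
exists q; split => //.
rewrite leq_eqVlt in sq; case/orP: sq => [/eqP sq | //]; exfalso.
have qg : is_gpath e (vx x p (a + i)) q by case: r => [[]].
apply: (hM (a + i)); first lia.
exists q; split => //; apply/negP => iq.
  have ee : e (vx x p (a + i)) (vx x p (a + i).-1).
    apply: esym; have := hE (a + i).-1 ltac:(lia).
    by have -> : (a + i).-1.+1 = a + i by lia.
  move: ya; rewrite (head_nb qg ee iq) (head_nb qg ey yq) eqxx //.
have ee : e (vx x p (a + i)) (vx x p (a + i).+1) by apply: hE; lia.
move: yb; rewrite (head_nb qg ee iq) (head_nb qg ey yq) eqxx //.
Qed.

End Aux.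

Lemma csplit (A : nat -> Prop) k : (forall j, j < k -> A j) \/ exists j, j < k /\ ~ A j.
Proof.
case: (classic (exists j, j < k /\ ~ A j)) => [h|h]; first by right.
left => j hj; apply: NNPP => hn; apply: h; by exists j; split.
Qed.

Lemma fchoice (P : nat -> nat -> Prop) k : (forall j, j < k -> exists i, P j i) ->
  exists f, forall j, j < k -> P j (f j).
Proof.
elim: k => [|k IH] h; first by exists (fun _ => 0).
have [f hf] := IH (fun j hj => h j (leqW hj)).
have [i0 hi0] := h k (ltnSn k).
exists (fun j => if j == k then i0 else f j) => j hj.
case: eqP => [->|ne] //; apply: hf; lia.
Qed.

Fixpoint Lf k d D := if D is D'.+1 then k * (2 * (2 * D'.+1 + 1) + Lf k d D') else d.+1.

Lemma mainl k d : 1 <= k -> forall (V : finType) (e : rel V), is_tree e -> longest_two_path e d ->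
  forall D (x : V) p, size p = Lf k d D -> C_gadget e D x p ->
  exists d', [/\ 1 <= d', d' <= D &
        exists k' (x : V) (p : seq V), k <= k' /\ strong_C_gadget e d' k' x p].
Proof.
move=> hk V e t l D; elim: D => [|D IH] x p hs hC.
  exfalso; have hP := gadget0 hC ltac:(rewrite hs /=; lia).
  have [x' [p' [tp sz]]] := @extend V e t _ x p hP (leqnn _).
  case: l => _ /(_ x' p' tp); rewrite hs /= in sz; lia.
set g := 2 * D.+1 + 1; set M := Lf k d D; set W := 2 * g + M.
have hs' : size p = k * W by rewrite hs.
have [hall | [j [jk hj]]] := csplit (fun j => exists i, j * W + g <= i <= j * W + g + M /\ marked e D.+1 x p i) k.
  have [f hf] := fchoice hall.
  exists D.+1; split => //; exists k, x, p; split => //; split => //.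
  exists (fun j => if j == 0 then 0 else if j <= k then f j.-1 else size p); split.
  - by [].
  - by rewrite /= ltnn.
  - move=> j; case: j => [|j] hj /=.
      rewrite hk; have [hb _] := hf 0 hk; move: hb; rewrite /g; lia.
    rewrite hj; have [hb1 _] := hf j hj.
    case: ifP => h2.
      have [hb2 _] := hf j.+1 h2; move: hb1 hb2; rewrite /W /g; lia.
    have ek : k = j.+1 by lia.
    rewrite hs' ek; move: hb1; rewrite /W /g; lia.
  - move=> j /andP [j1 jk]; case: j j1 jk => // j _ jk /=.
    by rewrite jk; have [_ hm] := hf j jk.
have hsub : j * W + g + M <= size p.
  have : j.+1 * W <= k * W by rewrite leq_mul2r jk orbT.
  rewrite hs' /W; lia.
have [d' [h1 h2 h3]] := IH (vx x p (j * W + g)) (sub x p (j * W + g) M)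
  ltac:(by rewrite size_mkseq) (sub_gadget t hC hsub ltac:(move=> i hi hm; apply: hj; exists i; split => //; lia)).
by exists d'; split => //; apply: leqW.
Qed.

Theorem lemma34 :
  forall k d : nat, 1 <= k -> 1 <= d ->
  exists L : nat, 0 < L /\
    forall (V : finType) (e : rel V),
      is_tree e -> longest_two_path e d ->
      (exists (x : V) (p : seq V), size p = L /\ C_gadget e d x p) ->
      exists d', [/\ 1 <= d', d' <= d &
        exists k' (x : V) (p : seq V), k <= k' /\ strong_C_gadget e d' k' x p].
Proof.
move=> k d hk hd; exists (Lf k d d); split.
  by case: d hd => // d' _; rewrite /= muln_gt0 hk addn_gt0 muln_gt0.
move=> V e t l [x [p [hs hC]]]; exact: mainl hk V e t l d x p hs hC.
Qed.
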